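(* A formal power series $\varphi(x)\in\mathbb{C}[[x]]$ is symplectic if and only if there exists a formal power series $\rho(y)\in\mathbb{C}[[y]]$ such that $\varphi(x)=\rho\big(x^2/(1-x)\big)$ (formal composition).
   Context: A formal power series $\varphi(x)=\sum_{i\ge0}\gamma_i x^i\in\mathbb{C}[[x]]$ is called symplectic if for every $m\ge1$ one has $\sum_{k=0}^{m-1}(-1)^k\binom{m-1}{k}\gamma_{m+k}=0$. Here $x^2/(1-x)=\sum_{j\ge2}x^j$ has zero constant term, so the composite is a well-defined formal power series. *)

(* Defs.v *)
From mathcomp Require Import all_boot all_order all_algebra.
From mathcomp Require Import complex.
From mathcomp Require Import Rstruct.
Set Implicit Arguments. Unset Strict Implicit. Unset Printing Implicit Defensive.
Import Order.TTheory GRing.Theory Num.Theory.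
Local Open Scope ring_scope.

Definition C : Type := complex Rdefinitions.RbaseSymbolsImpl.R.

Definition fps := nat -> C.

Definition fps_mul (f g : fps) : fps :=
  fun m => \sum_(i < m.+1) f i * g (m - i)%N.

Definition fps_one : fps := fun m => if m == 0%N then 1 else 0.

Fixpoint fps_pow (f : fps) (n : nat) : fps :=
  match n with
  | 0 => fps_one
  | n'.+1 => fps_mul f (fps_pow f n')
  end.

(* Formal composition rho(u) = sum_n rho_n u^n, for u with zero constant term
   (then u^n has no coefficient of x^m for n > m, so the sum is finite). *)
Definition fps_comp (rho u : fps) : fps :=
  fun m => \sum_(n < m.+1) rho n * fps_pow u n m.

(* The series x^2/(1-x) = sum_{j>=2} x^j. *)
Definition x2_over_1mx : fps := fun j => if (2 <= j)%N then 1 else 0.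

Definition symplectic (phi : fps) : Prop :=
  forall m : nat, (1 <= m)%N ->
    \sum_(k < m) (-1) ^+ k * ('C(m.-1, k))%:R * phi (m + k)%N = 0 :> C.

(* Main.v *)
From HB Require Import structures.
Require Import Defs.
From mathcomp Require Import all_boot all_order all_algebra.
From mathcomp Require Import zify.
From Stdlib Require Import FunctionalExtensionality.
Set Implicit Arguments. Unset Strict Implicit. Unset Printing Implicit Defensive.
Import Order.TTheory GRing.Theory Num.Theory.
Local Open Scope ring_scope.

From mathcomp Require Import complex Rstruct.
HB.instance Definition _ := GRing.Field.copy C (complex Rdefinitions.RbaseSymbolsImpl.R).
Notation b := (fps_pow x2_over_1mx).

Lemma sum_trunc (F : nat -> C) a c : (a <= c)%N ->
  (forall i, (a <= i)%N -> (i < c)%N -> F i = 0) ->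
  \sum_(i < c) F i = \sum_(i < a) F i.
Proof.
move=> ac H; rewrite (big_ord_widen _ _ ac) [RHS]big_mkcond /=.
apply: eq_bigr => i _; case: ifP => // /negbT; rewrite -leqNgt => ai.
by rewrite H.
Qed.

Lemma sum_rev (F : nat -> C) n : \sum_(i < n.+1) F (n - i)%N = \sum_(i < n.+1) F i.
Proof.
rewrite (reindex_inj rev_ord_inj) /=; apply: eq_bigr => i _.
congr F; have := ltn_ord i; lia.
Qed.

Lemma b_S0 n : b n.+1 0%N = 0.
Proof. by rewrite /= /fps_mul big_ord_recl big_ord0 /x2_over_1mx /= mul0r addr0. Qed.

Lemma b_S1 n : b n.+1 1%N = 0.
Proof. by rewrite /= /fps_mul !big_ord_recl big_ord0 /x2_over_1mx /= !mul0r !addr0. Qed.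

Lemma b_SS n j : b n.+1 j.+2 = \sum_(t < j.+1) b n t.
Proof.
rewrite /= /fps_mul big_ord_recl [X in _ + X]big_ord_recl /x2_over_1mx /= !mul0r !add0r.
rewrite -sum_rev; apply: eq_bigr => i _; rewrite mul1r.
by congr fps_pow; rewrite /bump /=; lia.
Qed.

Lemma H_sum r j : \sum_(t < j.+1) (if (2*r+2 <= t)%N then ('C(t-r-2, r))%:R else 0 : C)
  = if (2*r+4 <= j+2)%N then ('C(j-r-1, r.+1))%:R else 0.
Proof.
elim: j => [|j IH]; first by rewrite big_ord1 !ifF //; apply/negbTE; rewrite -ltnNge /=; lia.
rewrite big_ord_recr /= IH.
case: (ltnP j.+1 (2*r+2)) => h1.
  by rewrite !ifF ?addr0 //; lia.
case: (ltnP j (2*r+2)) => h2.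
  have -> : j = (2*r+1)%N by lia.
  rewrite ifF; last by apply/negbTE; rewrite -ltnNge; lia.
  rewrite ifT; last lia.
  have -> : ((2*r+1).+1 - r - 1 = r.+1)%N by lia.
  have -> : ((2*r+1).+1 - r - 2 = r)%N by lia.
  by rewrite !binn add0r.
rewrite !ifT; try lia.
have -> : (j.+1 - r - 1 = (j - r - 1).+1)%N by lia.
have -> : (j.+1 - r - 2 = (j - r - 1))%N by lia.
by rewrite binS natrD.
Qed.

Lemma b_closed r j : b r.+1 j = if (2*r+2 <= j)%N then ('C(j-r-2, r))%:R else 0.
Proof.
elim: r j => [|r IH] j.
  case: j => [|[|j]]; rewrite ?b_S0 ?b_S1 //.
  rewrite b_SS big_ord_recl big1 => [|i _]; last by rewrite /= /fps_one.
  by rewrite /= /fps_one /= addr0 subn2 /= bin0.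
case: j => [|j]; first by rewrite b_S0.
case: j => [|j]; first by rewrite b_S1 ifF //; apply/negbTE; rewrite -ltnNge; lia.
rewrite b_SS; under eq_bigr => t _ do rewrite IH. rewrite H_sum.
case: ifP => h; last by rewrite ifF //; apply/negbTE; move/negbT: h; lia.
rewrite ifT; last lia.
congr (GRing.natmul _ _); congr binomial; lia.
Qed.

Definition S (N : nat) (f : nat -> C) : C :=
  \sum_(k < N.+1) (-1) ^+ k * ('C(N, k))%:R * f k.

Lemma S_ext N f g : (forall k, f k = g k) -> S N f = S N g.
Proof. by move=> H; apply: eq_bigr => i _; rewrite H. Qed.

Lemma S_lin N f g : S N f - S N g = S N (fun k => f k - g k).
Proof. by rewrite /S -sumrB; apply: eq_bigr => i _; rewrite mulrBr. Qed.

Lemma S_opp N f : S N (fun k => - f k) = - S N f.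
Proof. by rewrite /S -sumrN; apply: eq_bigr => i _; rewrite mulrN. Qed.

Lemma S_succ N f : S N.+1 f = S N f - S N (fun k => f k.+1).
Proof.
have E : \sum_(i < N.+1) (-1) ^+ i.+1 * ('C(N.+1, i.+1))%:R * f i.+1 =
  \sum_(i < N) (-1) ^+ i.+1 * ('C(N, i.+1))%:R * f i.+1 - S N (fun k => f k.+1).
  rewrite /S -sumrN.
  under eq_bigr => i _ do rewrite binS natrD mulrDr mulrDl.
  rewrite big_split /= big_ord_recr /= bin_small // mulr0 mul0r addr0.
  congr (_ + _); apply: eq_bigr => i _.
  by rewrite exprS mulN1r !mulNr.
rewrite /S big_ord_recl /= E [in RHS]big_ord_recl /=.
rewrite /S addrA !bin0; congr (_ + _ - _); apply: eq_bigr => i _; by rewrite /bump leq0n add1n.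
Qed.

Lemma S_bin N : forall r c, (r < N)%N -> S N (fun k => ('C(c + k, r))%:R) = 0.
Proof.
elim: N => [//|N IH] r c rN.
rewrite S_succ S_lin.
case: r rN => [|r] rN.
  by rewrite /S big1 // => i _; rewrite !bin0 subrr mulr0.
rewrite (@S_ext _ _ (fun k => - ('C(c + k, r))%:R)); first by rewrite S_opp IH ?oppr0.
move=> k; rewrite addnS binS natrD; by rewrite opprD addrA subrr add0r.
Qed.

Lemma symp_S phi : symplectic phi <-> forall N, S N (fun k => phi (N.+1 + k)%N) = 0.
Proof.
split => H.
  by move=> N; have := H N.+1 isT.
by case=> [//|N] _; apply: H.
Qed.

Lemma b_zero n j : (j < 2 * n)%N -> b n j = 0.
Proof.
case: n => [//|r] h; rewrite b_closed ifF //; apply/negbTE; rewrite -ltnNge; lia.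
Qed.

Lemma b_symp n : symplectic (b n).
Proof.
apply/symp_S => N; case: n => [|r].
  by rewrite /S big1 // => i _; rewrite /= /fps_one /= mulr0.
case: (ltnP r N) => rN.
  rewrite (@S_ext _ _ (fun k => ('C((N - r.+1) + k, r))%:R)) ?S_bin //.
  move=> k; rewrite b_closed.
  case: ifP => h; first by congr (GRing.natmul _ _); congr binomial; lia.
  rewrite bin_small //; move/negbT: h; lia.
rewrite /S big1 // => i _; rewrite b_zero ?mulr0 //.
have := ltn_ord i; lia.
Qed.

Lemma comp_symp rho : symplectic (fps_comp rho x2_over_1mx).
Proof.
apply/symp_S => N.
rewrite /S /fps_comp.
have E : forall k : 'I_N.+1, \sum_(n < (N.+1 + k).+1) rho n * b n (N.+1 + k)%N
   = \sum_(n < (N.+1 + N).+1) rho n * b n (N.+1 + k)%N.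
  move=> k; symmetry; apply: (@sum_trunc (fun n => rho n * b n (N.+1 + k)%N)); first by have := ltn_ord k; lia.
  by move=> i h1 h2; rewrite b_zero ?mulr0 //; lia.
under eq_bigr => k _ do rewrite E mulr_sumr.
rewrite exchange_big /= big1 // => n _.
transitivity (rho n * S N (fun k => b n (N.+1 + k)%N)).
  rewrite /S mulr_sumr; apply: eq_bigr => k _; by rewrite mulrCA mulrA.
by move/symp_S: (b_symp n) => ->; rewrite mulr0.
Qed.

Lemma uniq_symp (phi psi : fps) : symplectic phi -> symplectic psi ->
  (forall n, phi (2 * n)%N = psi (2 * n)%N) -> phi = psi.
Proof.
move=> /symp_S Hf /symp_S Hg He; apply: functional_extensionality.
suff H : forall M t, (t < M)%N -> phi t = psi t by move=> t; apply: (H t.+1).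
elim=> [//|M IH] t tM.
case: (ltnP t M) => h; first exact: IH.
have {h tM} -> : t = M by lia.
have := odd_double_half M; case: (odd M) => /= hM.
  set N := M./2 in hM.
  have D : S N (fun k => phi (N.+1 + k)%N - psi (N.+1 + k)%N) = 0.
    by rewrite -S_lin Hf Hg subrr.
  move: D; rewrite /S big_ord_recr /= big1 => [|k _].
    rewrite add0r binn mulr1 => /eqP.
    rewrite mulf_eq0 signr_eq0 subr_eq0 /= => /eqP.
    by have -> : (N.+1 + N = M)%N by lia.
  by rewrite IH ?subrr ?mulr0 //; have := ltn_ord k; lia.
have -> : M = (2 * M./2)%N by lia.
exact: He.
Qed.

Fixpoint Rf (phi : fps) (n : nat) : nat -> C :=
  match n with
  | 0 => fun _ => 0
  | n'.+1 => fun j => if j == n' then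
      phi (2 * n')%N - \sum_(i < n') Rf phi n' i * b i (2 * n')%N
      else Rf phi n' j
  end.

Definition rhoOf (phi : fps) : fps := fun j => Rf phi j.+1 j.

Lemma Rf_stable phi m j : (j < m)%N -> Rf phi m j = rhoOf phi j.
Proof.
elim: m => [//|m IH] jm /=.
case: eqP => [->|ne]; first by rewrite /rhoOf /= eqxx.
apply: IH; lia.
Qed.

Lemma rho_eq phi n : rhoOf phi n =
  phi (2 * n)%N - \sum_(i < n) rhoOf phi i * b i (2 * n)%N.
Proof.
rewrite /rhoOf /= eqxx; congr (_ - _); apply: eq_bigr => i _.
by rewrite Rf_stable.
Qed.

Lemma b_diag n : b n (2 * n)%N = 1.
Proof.
case: n => [//|r]; rewrite b_closed ifT; last lia.
have -> : (2 * r.+1 - r - 2 = r)%N by lia.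
by rewrite binn.
Qed.

Lemma comp_even phi n : fps_comp (rhoOf phi) x2_over_1mx (2 * n)%N = phi (2 * n)%N.
Proof.
rewrite /fps_comp (@sum_trunc (fun i => rhoOf phi i * b i (2 * n)%N) n.+1); first last.
- by move=> i h1 h2; rewrite b_zero ?mulr0 //; lia.
- lia.
rewrite big_ord_recr /= b_diag mulr1 [rhoOf phi n]rho_eq.
by rewrite addrC subrK.
Qed.

Theorem proposition1p4 (phi : fps) :
  symplectic phi <-> exists rho : fps, phi = fps_comp rho x2_over_1mx.
Proof.
split.
  move=> H; exists (rhoOf phi); apply: uniq_symp => //.
    exact: comp_symp.
  by move=> n; rewrite comp_even.
by case=> rho ->; apply: comp_symp.
Qed.
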